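(* Let $A\in\mathbb{R}^{m\times n}$ be semi-monotone and let $A=P_1-R_1+S_1=P_2-R_2+S_2=P_3-R_3+S_3=P_4-R_4+S_4$ be four double proper weak regular splittings of $A$. Suppose $N(S_2)\supseteq N(P_2)$, $R(S_2)\subseteq R(P_2)$, $N(S_4)\supseteq N(P_4)$, $R(S_4)\subseteq R(P_4)$, $1\notin\sigma(S_2P_1^{\dagger})$ and $1\notin\sigma(S_4P_3^{\dagger})$. Define $\widehat{A}_1=(I-S_2P_1^{\dagger})A$, $\widehat{P}_1=P_2$, $\widehat{R}_1=R_2-S_2P_1^{\dagger}R_1$, and $\widehat{A}_2=(I-S_4P_3^{\dagger})A$, $\widehat{P}_2=P_4$, $\widehat{R}_2=R_4-S_4P_3^{\dagger}R_3$, and suppose $\widehat{A}_i^{\dagger}\geq 0$ for $i=1,2$. If $\widehat{P}_1^{\dagger}\widehat{A}_1\geq\widehat{P}_2^{\dagger}\widehat{A}_2$ and $\widehat{P}_1^{\dagger}\widehat{R}_1\geq\widehat{P}_2^{\dagger}\widehat{R}_2$, then $\rho(W_{12})\leq\rho(W_{34})<1$, where $$W_{12}=\begin{pmatrix} P_2^{\dagger}R_2-P_2^{\dagger}S_2P_1^{\dagger}R_1 & P_2^{\dagger}S_2P_1^{\dagger}S_1\\ I & 0\end{pmatrix},\qquad W_{34}=\begin{pmatrix} P_4^{\dagger}R_4-P_4^{\dagger}S_4P_3^{\dagger}R_3 & P_4^{\dagger}S_4P_3^{\dagger}S_3\\ I & 0\end{pmatrix}.$$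
   Context: For $M\in\mathbb{R}^{m\times n}$, $M^{\dagger}$ is its Moore–Penrose inverse, $R(M)$, $N(M)$ its range and null space; inequalities are entrywise; $\rho$ is the spectral radius, $\sigma$ the spectrum. $A$ is semi-monotone if $A^{\dagger}\geq0$. A double splitting $A=P-R+S$ is a double proper splitting if $R(P)=R(A)$ and $N(P)=N(A)$; it is double proper weak regular if moreover $P^{\dagger}\geq 0$, $P^{\dagger}R\geq 0$, $P^{\dagger}S\leq 0$. *)

(* Defs.v *)
From HB Require Import structures.
From mathcomp Require Import all_boot all_order all_algebra.
From mathcomp Require Import boolp classical_sets reals.
From mathcomp Require Import complex.
Set Implicit Arguments. Unset Strict Implicit. Unset Printing Implicit Defensive.
Import Order.TTheory GRing.Theory Num.Theory.
Local Open Scope ring_scope.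
Local Open Scope classical_set_scope.

Section Defs.
Variable R : realType.

Definition is_MP_inverse (m n : nat) (A : 'M[R]_(m, n)) (X : 'M[R]_(n, m)) : Prop :=
  [/\ A *m X *m A = A, X *m A *m X = X,
      (A *m X)^T = A *m X & (X *m A)^T = X *m A].

Definition pinv (m n : nat) (A : 'M[R]_(m, n)) : 'M[R]_(n, m) :=
  xget 0 [set X | is_MP_inverse A X].

Definition rangesp (m n : nat) (A : 'M[R]_(m, n)) : set 'cV[R]_m :=
  [set A *m x | x in [set: 'cV[R]_n]].
Definition nullsp (m n : nat) (A : 'M[R]_(m, n)) : set 'cV[R]_n :=
  [set x | A *m x = 0].

Definition mx_ge (m n : nat) (A B : 'M[R]_(m, n)) : Prop :=
  forall i j, B i j <= A i j.
Definition mx_nonneg (m n : nat) (A : 'M[R]_(m, n)) : Prop := mx_ge A 0.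
Definition mx_nonpos (m n : nat) (A : 'M[R]_(m, n)) : Prop := mx_ge 0 A.

Definition semi_monotone (m n : nat) (A : 'M[R]_(m, n)) : Prop :=
  mx_nonneg (pinv A).

Definition double_proper_weak_regular (m n : nat) (A P Q S : 'M[R]_(m, n)) : Prop :=
  A = P - Q + S /\
  [/\ rangesp P = rangesp A, nullsp P = nullsp A,
      mx_nonneg (pinv P), mx_nonneg (pinv P *m Q) & mx_nonpos (pinv P *m S)].

Definition spectrum (n : nat) (M : 'M[R]_n) : set R[i] :=
  [set l | eigenvalue (map_mx (fun x : R => x%:C%C) M) l].

Definition spectral_radius (n : nat) (M : 'M[R]_n) : R :=
  sup [set Normc.normc l | l in spectrum M].

End Defs.

(* Main.v *)
Require Import Defs.
From HB Require Import structures.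
From mathcomp Require Import all_boot all_order all_algebra.
From mathcomp Require Import boolp classical_sets reals.
From mathcomp Require Import complex.
From mathcomp Require Import polyrcf ring lra.
Import Order.TTheory GRing.Theory Num.Theory.
Import Normc.
Local Open Scope ring_scope.
Set Implicit Arguments. Unset Strict Implicit. Unset Printing Implicit Defensive.

Section Main.
Variable R : realType.
Lemma mxtr_eq0 (r n : nat) (X : 'M[R]_(r, n)) : X *m X^T = 0 -> X = 0.
Proof.
move=> H; apply/matrixP => i j; rewrite mxE.
have : (X *m X^T) i i = 0 by rewrite H mxE.
rewrite mxE => /psumr_eq0P H2.
have := H2 (fun k _ => ltac:(rewrite !mxE -expr2; exact: sqr_ge0)) j isT.
by rewrite !mxE -expr2 => /eqP; rewrite sqrf_eq0 => /eqP.
Qed.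

Lemma gram_unit (r n : nat) (G : 'M[R]_(r, n)) : row_free G -> G *m G^T \in unitmx.
Proof.
move=> fG; rewrite -row_free_unit -kermx_eq0; apply/eqP.
set K := kermx _.
have HK : K *m (G *m G^T) = 0 by rewrite mulmx_ker.
have : (K *m G) *m (K *m G)^T = 0.
  by rewrite trmx_mul mulmxA -(mulmxA K G) HK mul0mx.
move/mxtr_eq0 => /eqP; rewrite mulmx_free_eq0 //; by move/eqP.
Qed.

Lemma MP_exists (m n : nat) (A : 'M[R]_(m, n)) : exists X, is_MP_inverse A X.
Proof.
set F := col_base A; set G := row_base A.
have AFG : A = F *m G by rewrite mulmx_base.
have fG : row_free G by apply: row_base_free.
have fF : row_free F^T.
  by rewrite /row_free mxrank_tr; have := col_base_full A; rewrite /row_full.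
clearbody F G.
have uH := gram_unit fG.
have uK : F^T *m F \in unitmx by have := gram_unit fF; rewrite trmxK.
set H := G *m G^T in uH *; set K := F^T *m F in uK *.
have sH : H^T = H by rewrite /H trmx_mul trmxK.
have sK : K^T = K by rewrite /K trmx_mul trmxK.
have HE : G *m G^T = H by [].
have KE : F^T *m F = K by [].
clearbody H K.
exists (G^T *m invmx H *m invmx K *m F^T).
have E1 : A *m (G^T *m invmx H *m invmx K *m F^T) = F *m invmx K *m F^T.
  by rewrite [A in A *m _]AFG -!mulmxA (mulmxA G) HE (mulmxA H) mulmxV // mul1mx.
have E2 : (G^T *m invmx H *m invmx K *m F^T) *m A = G^T *m invmx H *m G.
  by rewrite [A in _ *m A]AFG !mulmxA -(mulmxA _ F^T) KE mulmxKV.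
split.
- by rewrite E1 [A in _ *m A]AFG -!mulmxA (mulmxA F^T) KE mulKmx.
- by rewrite E2 -!mulmxA (mulmxA G) HE (mulmxA H) mulmxV // mul1mx.
- by rewrite E1 !trmx_mul trmxK trmx_inv sK mulmxA.
- by rewrite E2 !trmx_mul trmxK trmx_inv sH mulmxA.
Qed.

Lemma pinvP (m n : nat) (A : 'M[R]_(m, n)) : is_MP_inverse A (pinv A).
Proof. by rewrite /pinv; apply: (xgetPex 0 (MP_exists A)). Qed.

Definition nn (m n : nat) (A : 'M[R]_(m, n)) := forall i j, 0 <= A i j.

Lemma nn_mul (m n p : nat) (A : 'M[R]_(m, n)) (B : 'M[R]_(n, p)) :
  nn A -> nn B -> nn (A *m B).
Proof. by move=> hA hB i j; rewrite mxE sumr_ge0 // => k _; rewrite mulr_ge0. Qed.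

Lemma nn_add (m n : nat) (A B : 'M[R]_(m, n)) : nn A -> nn B -> nn (A + B).
Proof. by move=> hA hB i j; rewrite mxE addr_ge0. Qed.

Lemma nn_scale (m n : nat) (k : R) (A : 'M[R]_(m, n)) : 0 <= k -> nn A -> nn (k *: A).
Proof. by move=> hk hA i j; rewrite mxE mulr_ge0. Qed.

Lemma nn_scalar (n : nat) (k : R) : 0 <= k -> nn (k%:M : 'M[R]_n).
Proof. by move=> hk i j; rewrite mxE mulrn_wge0. Qed.

Lemma nn_block (m1 m2 n1 n2 : nat) (A : 'M[R]_(m1, n1)) (B : 'M[R]_(m1, n2))
  (C : 'M[R]_(m2, n1)) (D : 'M[R]_(m2, n2)) :
  nn A -> nn B -> nn C -> nn D -> nn (block_mx A B C D).
Proof.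
move=> hA hB hC hD i j; rewrite -(splitK i) -(splitK j).
case: (split i) => i'; case: (split j) => j' /=.
- by rewrite block_mxEul.
- by rewrite block_mxEur.
- by rewrite block_mxEdl.
- by rewrite block_mxEdr.
Qed.

Lemma charE (N : nat) (M : 'M[R]_N) s : (char_poly M).[s] = \det (s%:M - M).
Proof.
rewrite /char_poly -horner_evalE -det_map_mx; congr (\det _).
apply/matrixP => i j; rewrite !mxE /= ?horner_evalE hornerD hornerN hornerMn hornerX hornerC.
by [].
Qed.

Lemma poly_root_right (p : {poly R}) x :
  0 < lead_coef p -> p.[x] <= 0 -> exists2 y, x <= y & root p y.
Proof.
move=> lc px.
have [n Hn] := poly_pinfty_gt_lc lc.
set b := Num.max x n.
have pb : 0 <= p.[b] by rewrite (le_trans (ltW lc)) // Hn // le_max lexx orbT.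
have xb : x <= b by rewrite le_max lexx.
have [y /andP[yin _] ry] := poly_ivt xb (introT andP (conj px pb)).
by exists y.
Qed.

Lemma poly_right_cont (q : {poly R}) y :
  (forall s, y < s -> 0 <= q.[s]) -> 0 <= q.[y].
Proof.
move=> H; rewrite leNgt; apply/negP => qy.
have e0 : 0 < - q.[y] by rewrite oppr_gt0.
have [d d0 Hd] := poly_cont y q e0.
have d20 : 0 < d / 2 by rewrite divr_gt0.
have := Hd (y + d / 2); rewrite addrAC subrr add0r gtr0_norm // ltr_pdivrMr //.
rewrite ltr_pMr // ltr1n => /(_ isT) /ltr_normlW.
rewrite ltrBlDr addNr => hs.
have := H (y + d / 2); rewrite ltrDl d20 => /(_ isT).
by rewrite leNgt hs.
Qed.


Lemma schur_det (N : nat) (a : 'M[R]_1) (b : 'M[R]_(1, N)) (c : 'M[R]_(N, 1))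
  (D X : 'M[R]_N) : X *m D = 1%:M ->
  \det (block_mx a b c D) = \det D * (a - b *m X *m c) 0 0.
Proof.
move=> XD.
have -> : block_mx a b c D =
  block_mx 1%:M (b *m X) 0 1%:M *m block_mx (a - b *m X *m c) 0 c D.
  rewrite mulmx_block !mul1mx !mul0mx ?mulmx0 !add0r ?addr0.
  by rewrite -(mulmxA b X D) XD mulmx1 subrK.
by rewrite det_mulmx det_ublock det_lblock !det1 !mul1r det_mx11 mulrC.
Qed.


Lemma mx11_sub (A B : 'M[R]_1) : (A - B) 0 0 = A 0 0 - B 0 0.
Proof. by rewrite !mxE. Qed.
Lemma mx11_scal (t : R) : (t%:M : 'M[R]_1) 0 0 = t.
Proof. by rewrite mxE. Qed.

Lemma lc_char (K : nat) (Q : 'M[R]_K) : 0 < lead_coef (char_poly Q).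
Proof. by rewrite (monicP (char_poly_monic Q)) ltr01. Qed.

Lemma pos_of (K : nat) (Q : 'M[R]_K) t :
  (forall s, t <= s -> ~~ root (char_poly Q) s) -> 0 < (char_poly Q).[t].
Proof.
move=> H; rewrite ltNge; apply/negP => /(poly_root_right (lc_char Q)) [y ty ry].
by have := H y ty; rewrite ry.
Qed.

Lemma nonneg_inv (N : nat) : forall (M : 'M[R]_N) (r : R), nn M ->
  (forall s, r <= s -> ~~ root (char_poly M) s) ->
  exists X : 'M[R]_N, nn X /\ X *m (r%:M - M) = 1%:M.
Proof.
elim: N => [|N IH] M r hM hroot.
  exists 0; split; first by move=> [].
  by apply/matrixP => [[]].
pose M' : 'M[R]_(1 + N) := M.
set a := ulsubmx M'; set b := ursubmx M'; set c := dlsubmx M'; set D := drsubmx M'.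
have MB : M = block_mx a b c D by rewrite submxK.
have hD : nn D by move=> i j; rewrite !mxE; apply: hM.
have hb : nn b by move=> i j; rewrite !mxE; apply: hM.
have hc : nn c by move=> i j; rewrite !mxE; apply: hM.
clearbody a b c D.
have detM : forall t (X : 'M[R]_N), X *m (t%:M - D) = 1%:M ->
    (char_poly M).[t] = (char_poly D).[t] * (t - a 0 0 - (b *m X *m c) 0 0).
  move=> t X HX; rewrite !charE.
  have -> : t%:M - M = block_mx (t%:M - a) (- b) (- c) (t%:M - D).
    by rewrite MB (scalar_mx_block 1 N) (opp_block_mx a b c D) (add_block_mx (t%:M : 'M_1)) add0r sub0r.
  rewrite (schur_det (t%:M - a) (- b) (- c) HX); congr (_ * _).
  by rewrite !(mulNmx, mulmxN) opprK !mx11_sub mx11_scal.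
have H1 : forall s, r <= s -> ~~ root (char_poly D) s.
  move=> s rs; apply/negP => rD.
  have p'0 : char_poly D != 0 by rewrite monic_neq0 // char_poly_monic.
  have sB : s < cauchy_bound (char_poly D).
    by have := root_in_cauchy_bound p'0 rD; rewrite in_itv /= => /andP[].
  case: (prev_rootP (char_poly D) (r - 1) (cauchy_bound (char_poly D))).
  - by move=> /eqP; rewrite (negbTE p'0).
  - move=> y _ py0 yin Hno.
    have sy : s <= y.
      rewrite leNgt; apply/negP => ys.
      by have := Hno s; rewrite in_itv /= ys sB rD => /(_ isT).
    have ry : r <= y by apply: le_trans sy.
    have noafter : forall t, y < t -> forall s', t <= s' -> ~~ root (char_poly D) s'.
      move=> t yt s' ts'; have ys' : y < s' by apply: lt_le_trans ts'.
      case: (ltP s' (cauchy_bound (char_poly D))) => sB'.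
        by apply: Hno; rewrite in_itv /= ys' sB'.
      by apply: ge_cauchy_bound => //; rewrite in_itv /= sB'.
    have qpos : forall t, y < t ->
        0 <= (('X - (a 0 0)%:P) * char_poly D - char_poly M).[t].
      move=> t yt.
      have [X [hX HX]] := IH D t hD (noafter t yt).
      rewrite hornerD hornerN hornerM hornerXsubC (detM t X HX).
      have -> : forall (x y z w : R), (x - y) * z - z * (x - y - w) = z * w.
        by move=> x y' z w; ring.
      apply: mulr_ge0; first exact: ltW (pos_of (noafter t yt)).
      exact: (nn_mul (nn_mul hb hX) hc).
    have := poly_right_cont qpos.
    rewrite hornerD hornerN hornerM hornerXsubC py0 mulr0 add0r oppr_ge0 => pMy.
    have [z yz rz] := poly_root_right (lc_char M) pMy.
    by have := hroot z (le_trans ry yz); rewrite rz.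
  - move=> cc _ _ Hno.
    have r1s : r - 1 < s by apply: lt_le_trans rs; rewrite ltrBlDr ltrDl ltr01.
    by have := Hno s; rewrite in_itv /= r1s sB rD => /(_ isT).
have [X [hX HX]] := IH D r hD H1.
have pD := pos_of H1.
have pM := pos_of hroot.
set u := X *m c; set v := b *m X.
have [w wE] : {w | v *m c = w%:M} by exists ((v *m c) 0 0); rewrite -mx11_scalar.
have [g gE] : {g | g = r - a 0 0 - w} by exists (r - a 0 0 - w).
have g0 : 0 < g.
  move: pM; rewrite (detM r X HX) -/v wE mx11_scal -gE.
  by rewrite pmulr_rgt0.
have hu : nn u by apply: nn_mul.
have hv : nn v by apply: nn_mul.
have gi0 : 0 <= g^-1 by rewrite ltW // invr_gt0.
have ggi : g^-1 * g = 1 by rewrite mulVf // gt_eqF.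
exists (block_mx (g^-1)%:M (g^-1 *: v) (g^-1 *: u) (X + g^-1 *: (u *m v))).
split.
  have h4 : nn (X + g^-1 *: (u *m v)).
    by apply: nn_add => //; apply: nn_scale => //; apply: nn_mul.
  exact (@nn_block 1 N 1 N _ _ _ _ (nn_scalar gi0) (nn_scale gi0 hv) (nn_scale gi0 hu) h4).
have -> : r%:M - M = block_mx (r - a 0 0)%:M (- b) (- c) (r%:M - D).
  rewrite MB (scalar_mx_block 1 N) (opp_block_mx a b c D) (add_block_mx (r%:M : 'M_1)).
  by rewrite add0r sub0r raddfB /= -mx11_scalar.
have vD : v *m (r%:M - D) = b by rewrite /v -mulmxA HX mulmx1.
refine (eq_trans (mulmx_block (g^-1)%:M (g^-1 *: v) (g^-1 *: u) (X + g^-1 *: (u *m v))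
   (r - a 0 0)%:M (- b) (- c) (r%:M - D)) _).
refine (eq_trans _ (esym (scalar_mx_block 1 N 1))); congr block_mx.
- rewrite mul_mx_scalar scale_scalar_mx mulmxN -scalemxAl wE scale_scalar_mx -raddfB /=.
  by rewrite -ggi gE; congr (_%:M); ring.
- by rewrite mul_scalar_mx -scalemxAl vD scalerN addNr.
- rewrite mul_mx_scalar mulmxN mulmxDl -scalemxAl -mulmxA wE mul_mx_scalar -/u.
  rewrite !scalerA -{2}(scale1r u) -scalerDl -scalerBl.
  have -> : (r - a 0 0) * g^-1 - (1 + g^-1 * w) = g^-1 * g - 1 by rewrite gE; ring.
  by rewrite ggi subrr scale0r.
- rewrite mulmxN mulmxDl HX -scalemxAl -mulmxA vD -scalemxAl.
  by rewrite addrCA addNr addr0.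
Qed.

Lemma mxsubE (m n : nat) (A B : 'M[R]_(m, n)) i j : (A - B) i j = A i j - B i j.
Proof. by rewrite !mxE. Qed.
Lemma mxscaleE (m n : nat) (k : R) (A : 'M[R]_(m, n)) i j : (k *: A) i j = k * A i j.
Proof. by rewrite !mxE. Qed.

Lemma CW (N : nat) (M : 'M[R]_N) (v : 'cV[R]_N) (r : R) : nn M -> nn v -> v != 0 ->
  (forall i, r * v i 0 <= (M *m v) i 0) -> exists2 s, r <= s & root (char_poly M) s.
Proof.
move=> hM hv v0 Hv.
have [//|H] := pselect (exists2 s, r <= s & root (char_poly M) s).
have H' : forall s, r <= s -> ~~ root (char_poly M) s.
  by move=> s rs; apply/negP => rs'; apply: H; exists s.
have [X [hX HX]] := nonneg_inv hM H'.
have vE : v = X *m ((r%:M - M) *m v) by rewrite mulmxA HX mul1mx.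
have wk : forall k, ((r%:M - M) *m v) k 0 <= 0.
  by move=> k; rewrite mulmxBl mul_scalar_mx mxsubE mxscaleE subr_le0 Hv.
case/negP: v0; apply/eqP/matrixP => i j; rewrite (ord1 j) [(0 : 'cV[R]_N) i 0]mxE.
apply/le_anti; rewrite hv andbT vE mxE.
by apply: sumr_le0 => k _; apply: mulr_ge0_le0.
Qed.

Definition le_mx (m n : nat) (A B : 'M[R]_(m, n)) := forall i j, A i j <= B i j.

Lemma le_mx_mull (m n p : nat) (A : 'M[R]_(m, n)) (x y : 'M[R]_(n, p)) :
  nn A -> le_mx x y -> le_mx (A *m x) (A *m y).
Proof. by move=> hA hxy i j; rewrite !mxE; apply: ler_sum => k _; apply: ler_wpM2l. Qed.

Lemma le_mx_mulr (m n p : nat) (A B : 'M[R]_(m, n)) (x : 'M[R]_(n, p)) :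
  nn x -> le_mx A B -> le_mx (A *m x) (B *m x).
Proof. by move=> hx hAB i j; rewrite !mxE; apply: ler_sum => k _; apply: ler_wpM2r. Qed.

Definition mpow (n : nat) (T : 'M[R]_n) k := iter k (fun X => X *m T) 1%:M.

Arguments mpow : simpl never.
Lemma mpowS (n : nat) (T : 'M[R]_n) k : mpow T k.+1 = mpow T k *m T.
Proof. by []. Qed.

Lemma nn_mpow (n : nat) (T : 'M[R]_n) k : nn T -> nn (mpow T k).
Proof.
move=> hT; elim: k => [|k IH]; last by rewrite mpowS; apply: nn_mul.
by move=> i j; rewrite /mpow /= mxE mulrn_wge0.
Qed.


Lemma Fk_identity (n m : nat) (T E : 'M[R]_n) (Pd Ad : 'M[R]_(n, m)) (hA : 'M[R]_(m, n)) :
  T *m E = T -> E - Pd *m hA = T -> Pd *m hA *m Ad = Pd -> E *m Ad = Ad ->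
  forall k, \sum_(j < k) mpow T j *m Pd = Ad - mpow T k *m Ad.
Proof.
move=> TE EPT PAA EA k.
have H1 : (\sum_(j < k) mpow T j *m Pd) *m hA = E - mpow T k *m E.
  elim: k => [|k IH]; first by rewrite big_ord0 mul0mx /mpow /= mul1mx subrr.
  rewrite big_ord_recr /= mulmxDl IH mpowS -(mulmxA _ T E) TE.
  rewrite -(mulmxA _ Pd hA) -addrA; congr (_ + _).
  have h : mpow T k *m T = mpow T k *m E - mpow T k *m (Pd *m hA) by rewrite -mulmxBr EPT.
  by rewrite h opprB addrC.
have H2 : \sum_(j < k) mpow T j *m Pd = (\sum_(j < k) mpow T j *m Pd) *m hA *m Ad.
  rewrite !mulmx_suml; apply: eq_bigr => j _.
  by rewrite -!mulmxA (mulmxA Pd) PAA.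
by rewrite H2 H1 mulmxBl EA -mulmxA EA.
Qed.

Lemma conv_core (n m : nat) (T : 'M[R]_n) (Pd Ad : 'M[R]_(n, m)) (V : 'M[R]_(m, n)) :
  nn T -> nn Pd -> nn Ad -> T = Pd *m V ->
  (forall k, le_mx (\sum_(j < k) mpow T j *m Pd) Ad) ->
  forall u : 'cV[R]_n, nn u -> (forall i, u i 0 <= (T *m u) i 0) -> u = 0.
Proof.
move=> hT hP hAd TPV Fk u hu Tu.
have Tj : forall j i, u i 0 <= (mpow T j *m u) i 0.
  elim=> [|j IH] i; first by rewrite /mpow /= mul1mx.
  apply: (le_trans (IH i)); rewrite mpowS -mulmxA.
  apply: (le_mx_mull (nn_mpow j hT)) => i' j'; rewrite (ord1 j'); exact: Tu.
set w := map_mx (fun x => `|x|) (V *m u).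
have hw : nn w by move=> i j; rewrite mxE normr_ge0.
have Vw : le_mx (V *m u) w by move=> i j; rewrite [X in _ <= X]mxE ler_norm.
have key : forall (k : nat) i, k%:R * u i 0 <= (Ad *m w) i 0.
  move=> k i.
  have E : \sum_(j < k) mpow T j.+1 *m u = (\sum_(j < k) mpow T j *m Pd) *m (V *m u).
    rewrite mulmx_suml; apply: eq_bigr => j _.
    by rewrite mpowS TPV !mulmxA.
  apply: (@le_trans _ _ ((\sum_(j < k) mpow T j.+1 *m u) i 0)).
    rewrite summxE -[k in k%:R]card_ord -sumr_const.
    by rewrite mulr_suml; apply: ler_sum => j _; rewrite mul1r.
  rewrite E; apply: (le_trans (le_mx_mull _ Vw i 0)).
    move=> a b; rewrite summxE; apply: sumr_ge0 => j _; apply: nn_mul => //.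
    exact: nn_mpow.
  exact: le_mx_mulr hw (Fk k) i 0.
apply/matrixP => i j; rewrite (ord1 j) mxE.
apply/le_anti; rewrite hu andbT leNgt; apply/negP => ui.
set c := (Ad *m w) i 0.
have := key (Num.Def.archi_bound (c / u i 0)) i.
rewrite -ler_pdivlMr // leNgt => /negP; apply.
apply: archi_boundP; apply: divr_ge0; last exact: hu.
rewrite /c mxE; apply: sumr_ge0 => k _; exact: mulr_ge0.
Qed.


Lemma char_poly_tr (F : fieldType) (n : nat) (M : 'M[F]_n) : char_poly M^T = char_poly M.
Proof.
rewrite /char_poly -det_tr; congr (\det _).
by apply/matrixP => i j; rewrite !mxE eq_sym.
Qed.

Lemma eig_col (n : nat) (M : 'M[R[i]]_n) l : eigenvalue M l ->
  exists2 y : 'cV_n, M *m y = l *: y & y != 0.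
Proof.
rewrite eigenvalue_root_char -char_poly_tr -eigenvalue_root_char => /eigenvalueP [v vM v0].
exists v^T; last by rewrite trmx_eq0.
by have := congr1 trmx vM; rewrite trmx_mul trmxK linearZ.
Qed.

Lemma normc_real (x : R) : normc (x%:C)%C = `|x|.
Proof. by rewrite /normc /= expr0n /= addr0 sqrtr_sqr. Qed.

Lemma normc_ge0 (x : R[i]) : 0 <= normc x.
Proof. by case: x => a b; rewrite /normc sqrtr_ge0. Qed.

Lemma normc_sum (I : finType) (F : I -> R[i]) : normc (\sum_i F i) <= \sum_i normc (F i).
Proof.
apply: (big_ind2 (fun x y => normc x <= y)); first by rewrite normc0.
  by move=> x1 x2 y1 y2 h1 h2; apply: (le_trans (le_normcD _ _)); apply: lerD.
by [].
Qed.

Lemma map_mx1C (n : nat) : map_mx (fun x : R => (x%:C)%C) (1%:M : 'M_n) = 1%:M.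
Proof. by apply/matrixP => i j; rewrite !mxE; case: (i == j). Qed.
Lemma map_mx0C (m n : nat) : map_mx (fun x : R => (x%:C)%C) (0 : 'M_(m, n)) = 0.
Proof. by apply/matrixP => i j; rewrite !mxE. Qed.

Lemma eig_to_vec (n : nat) (B C : 'M[R]_n) l : nn B -> nn C ->
  spectrum (block_mx B C 1%:M 0) l -> l != 0 ->
  exists u : 'cV[R]_n, [/\ nn u, u != 0 &
    forall i, normc l * u i 0 <= (B *m u) i 0 + (normc l)^-1 * (C *m u) i 0].
Proof.
move=> hB hC /eig_col [y Wy y0] l0.
rewrite map_block_mx map_mx1C map_mx0C -[y]vsubmxK mul_block_col scale_col_mx in Wy.
case/eq_col_mx: Wy => Hz Hw.
set z := usubmx y in Hz Hw y0; set w := dsubmx y in Hz Hw y0.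
rewrite mul1mx mul0mx addr0 in Hw.
have wE : w = l^-1 *: z by rewrite Hw scalerA mulVf // scale1r.
have z0 : z != 0.
  apply: contraNneq y0 => z0; rewrite -[y]vsubmxK -/z -/w wE z0 scaler0.
  by apply/eqP/matrixP => i j; rewrite !mxE; case: splitP => k _; rewrite mxE.
exists (map_mx (fun x => normc x) z); split.
- by move=> i j; rewrite mxE normc_ge0.
- apply: contraNneq z0 => /matrixP u0; apply/eqP/matrixP => i j.
  by have := u0 i j; rewrite !mxE => /eq0_normc.
move=> i.
move/matrixP: Hz => /(_ i 0) Hi; rewrite [in RHS]mxE in Hi.
rewrite {1}mxE -normcM -Hi wE [X in normc X]mxE.
apply: (le_trans (le_normcD _ _)); apply: lerD.
  rewrite [X in normc X]mxE [X in _ <= X]mxE.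
  apply: (le_trans (normc_sum _)); apply: ler_sum => j _.
  by rewrite !mxE normcM normc_real ger0_norm.
rewrite [X in normc X]mxE [X in _ <= _ * X]mxE mulr_sumr.
apply: (le_trans (normc_sum _)); apply: ler_sum => j _.
rewrite !mxE normcM normcM normcV normc_real ger0_norm //.
by rewrite mulrCA.
Qed.

Lemma spec_fin (n : nat) (M : 'M[R]_n) : exists rs : seq R[i],
  forall l, spectrum M l -> l \in rs.
Proof.
have [rs prs] := closed_field_poly_normal (char_poly (map_mx (fun x : R => (x%:C)%C) M)).
exists rs => l; rewrite /spectrum /= eigenvalue_root_char prs rootZ ?root_prod_XsubC //.
by rewrite lead_coef_eq0 monic_neq0 // char_poly_monic.
Qed.

Definition specset (n : nat) (M : 'M[R]_n) := [set normc l | l in spectrum M]%classic.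

Lemma spec_has_sup (n : nat) (M : 'M[R]_n) l : spectrum M l -> has_sup (specset M).
Proof.
move=> hl; split; first by exists (normc l), l.
have [rs Hrs] := spec_fin M.
exists (\sum_(z <- rs) normc z) => x [l' hl' <-].
rewrite (big_rem l') ?Hrs //= lerDl; apply: sumr_ge0 => z _; exact: normc_ge0.
Qed.

Lemma sr_ub (n : nat) (M : 'M[R]_n) l : spectrum M l -> normc l <= spectral_radius M.
Proof.
move=> hl; apply: (sup_upper_bound (spec_has_sup hl)); by exists l.
Qed.

Lemma sr_le (n : nat) (M : 'M[R]_n) b : 0 <= b ->
  (forall l, spectrum M l -> normc l <= b) -> spectral_radius M <= b.
Proof.
move=> b0 H; have [[l hl]|N] := pselect (exists l, spectrum M l).
  by apply: ge_sup; [exists (normc l), l | move=> x [l' hl' <-]; apply: H].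
rewrite /spectral_radius.
have -> : [set normc l | l in spectrum M]%classic = set0.
  by apply/seteqP; split => x //= [l hl _]; apply: N; exists l.
by rewrite sup0.
Qed.

Lemma sr_ge0 (n : nat) (M : 'M[R]_n) : 0 <= spectral_radius M.
Proof.
have [[l hl]|N] := pselect (exists l, spectrum M l).
  exact: le_trans (normc_ge0 l) (sr_ub hl).
rewrite /spectral_radius.
have -> : [set normc l | l in spectrum M]%classic = set0.
  by apply/seteqP; split => x //= [l hl _]; apply: N; exists l.
by rewrite sup0.
Qed.

Lemma sr_lt1 (n : nat) (M : 'M[R]_n) :
  (forall l, spectrum M l -> normc l < 1) -> spectral_radius M < 1.
Proof.
move=> H; have [rs Hrs] := spec_fin M.
set P := eigenvalue (map_mx (fun x : R => (x%:C)%C) M).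
set b := \big[Num.max/0]_(z <- rs | P z) normc z.
have b1 : b < 1 by apply: bigmax_lt => //; apply: H.
have b0 : 0 <= b.
  rewrite /b; elim: rs {Hrs b b1} => [|x rs IH]; rewrite ?big_nil ?big_cons //.
  by case: (P x) => //; rewrite le_max IH orbT.
apply: le_lt_trans b1; apply: sr_le => //.
by move=> l hl; apply: le_bigmax_seq; [apply: Hrs | exact: hl].
Qed.

Lemma root_spec (n : nat) (M : 'M[R]_n) s : root (char_poly M) s -> spectrum M (s%:C)%C.
Proof.
move=> rs; rewrite /spectrum /= eigenvalue_root_char.
have -> : map_mx (fun x : R => (x%:C)%C) M = map_mx (real_complex R) M by [].
by rewrite -map_char_poly; apply: rmorph_root.
Qed.

Lemma mul_col_entry (p q k : nat) (A : 'M[R]_(p, q)) (Y : 'M[R]_(q, k)) i j :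
  (A *m Y) i j = (A *m col j Y) i 0.
Proof. by rewrite !mxE; apply: eq_bigr => l _; rewrite !mxE. Qed.

Lemma null_mul (p p' q k : nat) (P : 'M[R]_(p, q)) (Q : 'M[R]_(p', q)) (Y : 'M[R]_(q, k)) :
  (forall x : 'cV_q, P *m x = 0 -> Q *m x = 0) -> P *m Y = 0 -> Q *m Y = 0.
Proof.
move=> H PY; apply/matrixP => i j; rewrite mul_col_entry H ?mxE //.
apply/matrixP => i' j'; rewrite (ord1 j') -mul_col_entry PY.
by rewrite !mxE.
Qed.

Lemma range_mul (p q q' : nat) (A : 'M[R]_(p, q)) (S : 'M[R]_(p, q')) :
  (forall x : 'cV_q', exists y, S *m x = A *m y) -> A *m pinv A *m S = S.
Proof.
move=> H; have [H1 _ _ _] := pinvP A.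
apply/matrixP => i j; have [y hy] := H (col j 1%:M).
have cS : col j S = A *m y.
  by rewrite -hy; apply/matrixP => a b; rewrite (ord1 b) -mul_col_entry mulmx1 mxE.
by rewrite mul_col_entry cS !mulmxA H1 -cS mxE.
Qed.

Lemma nullsp_imp (p p' q : nat) (P : 'M[R]_(p, q)) (Q : 'M[R]_(p', q)) :
  classical_sets.subset (nullsp P) (nullsp Q) -> forall x : 'cV_q, P *m x = 0 -> Q *m x = 0.
Proof. by move=> H x Px; apply: H. Qed.

Lemma rangesp_imp (p q q' : nat) (A : 'M[R]_(p, q)) (S : 'M[R]_(p, q')) :
  classical_sets.subset (rangesp S) (rangesp A) ->
  forall x : 'cV_q', exists y, S *m x = A *m y.
Proof.
move=> H x; have : rangesp S (S *m x) by exists x.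
by move/H => [y _ <-]; exists y.
Qed.

Lemma proj_eq (p p' q : nat) (P : 'M[R]_(p, q)) (Q : 'M[R]_(p', q)) :
  (forall x : 'cV_q, P *m x = 0 -> Q *m x = 0) ->
  (forall x : 'cV_q, Q *m x = 0 -> P *m x = 0) ->
  pinv P *m P = pinv Q *m Q.
Proof.
move=> HPQ HQP.
have [P1 P2 P3 P4] := pinvP P; have [Q1 Q2 Q3 Q4] := pinvP Q.
have X1 : pinv P *m P *m (1%:M - pinv Q *m Q) = 0.
  rewrite -mulmxA; apply/eqP; rewrite -[_ == _]/(_) ; apply/eqP.
  have -> : P *m (1%:M - pinv Q *m Q) = 0.
    by apply: (null_mul HQP); rewrite mulmxBr mulmx1 mulmxA Q1 subrr.
  by rewrite mulmx0.
have Y1 : pinv Q *m Q *m (1%:M - pinv P *m P) = 0.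
  rewrite -mulmxA.
  have -> : Q *m (1%:M - pinv P *m P) = 0.
    by apply: (null_mul HPQ); rewrite mulmxBr mulmx1 mulmxA P1 subrr.
  by rewrite mulmx0.
move: X1 Y1; rewrite !mulmxBr !mulmx1 => /eqP; rewrite subr_eq0 => /eqP X1.
move/eqP; rewrite subr_eq0 => /eqP Y1.
by rewrite -[LHS]P4 {1}X1 trmx_mul P4 Q4 -Y1.
Qed.

Lemma zl (V : zmodType) (a b c d e : V) : (a - b + c) - (c - d + e) = a - (b - d + e).
Proof. by rewrite !opprD !opprK !addrA; congr (_ - _); rewrite addrK. Qed.

Lemma tonn (p q : nat) (X : 'M[R]_(p, q)) : mx_nonneg X -> nn X.
Proof. by move=> H i j; have := H i j; rewrite mxE. Qed.
Lemma tonp (p q : nat) (X : 'M[R]_(p, q)) : mx_nonpos X -> forall i j, X i j <= 0.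
Proof. by move=> H i j; have := H i j; rewrite mxE. Qed.

Lemma hat_conv (m n : nat) (A P1 R1 S1 P2 R2 S2 : 'M[R]_(m, n)) :
  double_proper_weak_regular A P1 R1 S1 -> double_proper_weak_regular A P2 R2 S2 ->
  classical_sets.subset (nullsp P2) (nullsp S2) ->
  classical_sets.subset (rangesp S2) (rangesp P2) ->
  ~ spectrum (S2 *m pinv P1) 1 ->
  mx_nonneg (pinv ((1%:M - S2 *m pinv P1) *m A)) ->
  [/\ nn (pinv P2 *m R2 - pinv P2 *m S2 *m pinv P1 *m R1),
      nn (pinv P2 *m S2 *m pinv P1 *m S1),
      pinv P2 *m ((1%:M - S2 *m pinv P1) *m A) = pinv P2 *m P2 -
        ((pinv P2 *m R2 - pinv P2 *m S2 *m pinv P1 *m R1) + pinv P2 *m S2 *m pinv P1 *m S1) &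
      forall l, spectrum (block_mx (pinv P2 *m R2 - pinv P2 *m S2 *m pinv P1 *m R1)
                 (pinv P2 *m S2 *m pinv P1 *m S1) 1%:M 0) l -> normc l < 1].
Proof.
move=> [AE1 [RP1 NP1 nP1 nPR1 nPS1]] [AE2 [RP2 NP2 nP2 nPR2 nPS2]] NS2 RS2 spK nAd.
have [P1a P1b P1c P1e] := pinvP P1.
have [P2a P2b P2c P2e] := pinvP P2.
have [Aa Ab Ac Ae] := pinvP A.
set P1d := pinv P1 in P1a P1b P1c P1e nPR1 nPS1 spK nAd *.
set P2d := pinv P2 in P2a P2b P2c P2e nPR2 nPS2 *.
set K := S2 *m P1d in spK nAd *.
set hA := (1%:M - K) *m A in nAd *.
have [Ha Hb Hc He] := pinvP hA.
set Ad := pinv hA in nAd Ha Hb Hc He *.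
have hAd := tonn nAd.
set B := P2d *m R2 - P2d *m S2 *m P1d *m R1.
set C := P2d *m S2 *m P1d *m S1.
have hB : nn B.
  move=> i j; rewrite /B -(mulmxA (P2d *m S2)) mxsubE subr_ge0.
  apply: (@le_trans _ _ 0); last exact: (tonn nPR2).
  rewrite mxE; apply: sumr_le0 => k _; apply: mulr_le0_ge0; first exact: (tonp nPS2 i k).
  exact: (tonn nPR1).
have hC : nn C.
  move=> i j; rewrite /C -(mulmxA (P2d *m S2)) mxE; apply: sumr_ge0 => k _.
  by apply: mulr_le0; apply: tonp.
have n2A : forall x : 'cV_n, P2 *m x = 0 -> A *m x = 0.
  by move=> x h; have : nullsp P2 x by []; rewrite NP2.
have nA2 : forall x : 'cV_n, A *m x = 0 -> P2 *m x = 0.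
  by move=> x h; have : nullsp A x by []; rewrite -NP2.
have n1A : forall x : 'cV_n, P1 *m x = 0 -> A *m x = 0.
  by move=> x h; have : nullsp P1 x by []; rewrite NP1.
have n1S2 : forall x : 'cV_n, P1 *m x = 0 -> S2 *m x = 0.
  by move=> x h; apply: (nullsp_imp NS2); apply: nA2; apply: n1A.
have SPP : K *m P1 = S2.
  have := null_mul (Y := 1%:M - P1d *m P1) n1S2.
  rewrite !mulmxBr !mulmx1 mulmxA P1a subrr => /(_ erefl) /eqP.
  by rewrite subr_eq0 /K mulmxA => /eqP.
have hAeq : hA = P2 - (R2 - K *m R1 + K *m S1).
  have KA : K *m A = S2 - K *m R1 + K *m S1 by rewrite AE1 mulmxDr mulmxBr SPP.
  by rewrite /hA mulmxBl mul1mx KA {1}AE2 zl.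
set V := R2 - K *m R1 + K *m S1.
have TV : P2d *m V = B + C.
  by rewrite /V mulmxDr mulmxBr /B /C /K !mulmxA.
set T := B + C.
set E := P2d *m P2.
have eqA : P2d *m hA = E - T by rewrite hAeq mulmxBr TV.
have hAE : hA *m E = hA.
  have : P2 *m (1%:M - E) = 0 by rewrite mulmxBr mulmx1 /E mulmxA P2a subrr.
  move/(null_mul (Q := hA)) => /(_ _) H.
  have : hA *m (1%:M - E) = 0.
    by apply: H => x /n2A Ax; rewrite /hA -mulmxA Ax mulmx0.
  by rewrite mulmxBr mulmx1 => /eqP; rewrite subr_eq0 => /eqP.
have TE : T *m E = T.
  have VE : V *m E = V.
    have -> : V = P2 - hA by rewrite hAeq subKr.
    by rewrite mulmxBl hAE /E mulmxA P2a.
  by rewrite /T -TV -mulmxA VE.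
have Uu : 1%:M - K \in unitmx.
  rewrite unitmxE unitfE; apply/negP => /eqP d0; apply: spK.
  have : root (char_poly K) 1 by rewrite /root charE d0.
  by move/root_spec.
have rP2 : forall x : 'cV_n, exists y, P2 *m x = A *m y.
  by apply: rangesp_imp => v hv; rewrite -RP2.
have rS2 : forall x : 'cV_n, exists y, S2 *m x = A *m y.
  by apply: rangesp_imp => v /RS2; rewrite RP2.
set Xm := invmx (1%:M - K) *m P2.
have UX : (1%:M - K) *m Xm = P2 by rewrite /Xm mulKVmx.
have XmE : Xm = P2 + S2 *m (P1d *m Xm).
  by move: UX; rewrite mulmxBl mul1mx => <-; rewrite mulmxA subrK.
have AXm : A *m pinv A *m Xm = Xm.
  by rewrite {1}XmE mulmxDr (range_mul rP2) (mulmxA (A *m pinv A)) (range_mul rS2) -XmE.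
have P2Z : P2 = hA *m (pinv A *m Xm) by rewrite /hA -!mulmxA (mulmxA A) AXm UX.
clearbody Ad hA.
have PAA : P2d *m hA *m Ad = P2d.
  have H1 : P2^T *m (hA *m Ad) = P2^T.
    have : hA *m Ad *m P2 = P2 by rewrite {1}P2Z mulmxA Ha.
    by move/(congr1 trmx); rewrite trmx_mul Hc.
  have H2 : P2d = P2d *m P2d^T *m P2^T by rewrite -mulmxA -trmx_mul P2c mulmxA P2b.
  by rewrite {1}H2 -!mulmxA H1 mulmxA -H2.
have EA : E *m Ad = Ad.
  have H1 : Ad = hA^T *m Ad^T *m Ad by rewrite -trmx_mul He Hb.
  have H2 : E *m hA^T = hA^T by rewrite /E -P2e -trmx_mul hAE.
  by rewrite {1}H1 !mulmxA H2 -H1.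
have hT : nn T by move=> i j; rewrite mxE addr_ge0.
split => //.
move=> l hl.
have [->|l0] := eqVneq l 0; first by rewrite normc0 ltr01.
have [u [hu u0 Hu]] := eig_to_vec hB hC hl l0.
rewrite ltNge; apply/negP => l1.
apply: (negP u0); apply/eqP.
have TPV : T = P2d *m V by [].
apply: (conv_core hT (tonn nP2) hAd TPV).
- move=> k; rewrite (Fk_identity TE _ PAA EA); last by rewrite eqA subKr.
  move=> i j; rewrite mxsubE gerBl; apply: nn_mul => //; exact: nn_mpow.
- exact: hu.
move=> i.
have l0' : 0 < normc l by apply: lt_le_trans l1.
apply: (le_trans _ (le_trans (Hu i) _)).
  by rewrite ler_peMl // hu.
have TU : (T *m u) i 0 = (B *m u) i 0 + (C *m u) i 0 by rewrite /T mulmxDl mxE.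
rewrite TU lerD2l; apply: ler_piMl; first exact: nn_mul.
by rewrite invf_le1.
Qed.

Lemma mxaddE (p q : nat) (X Y : 'M[R]_(p, q)) i j : (X + Y) i j = X i j + Y i j.
Proof. by rewrite !mxE. Qed.

End Main.

Theorem theorem3p13 (R : realType) (m n : nat) (A : 'M[R]_(m, n))
  (P1 R1 S1 P2 R2 S2 P3 R3 S3 P4 R4 S4 : 'M[R]_(m, n)) :
  semi_monotone A ->
  double_proper_weak_regular A P1 R1 S1 ->
  double_proper_weak_regular A P2 R2 S2 ->
  double_proper_weak_regular A P3 R3 S3 ->
  double_proper_weak_regular A P4 R4 S4 ->
  classical_sets.subset (nullsp P2) (nullsp S2) ->
  classical_sets.subset (rangesp S2) (rangesp P2) ->
  classical_sets.subset (nullsp P4) (nullsp S4) ->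
  classical_sets.subset (rangesp S4) (rangesp P4) ->
  ~ spectrum (S2 *m pinv P1) 1 ->
  ~ spectrum (S4 *m pinv P3) 1 ->
  let hA1 := (1%:M - S2 *m pinv P1) *m A in
  let hP1 := P2 in
  let hR1 := R2 - S2 *m pinv P1 *m R1 in
  let hA2 := (1%:M - S4 *m pinv P3) *m A in
  let hP2 := P4 in
  let hR2 := R4 - S4 *m pinv P3 *m R3 in
  mx_nonneg (pinv hA1) ->
  mx_nonneg (pinv hA2) ->
  mx_ge (pinv hP1 *m hA1) (pinv hP2 *m hA2) ->
  mx_ge (pinv hP1 *m hR1) (pinv hP2 *m hR2) ->
  let W12 : 'M[R]_(n + n) :=
    block_mx (pinv P2 *m R2 - pinv P2 *m S2 *m pinv P1 *m R1)
             (pinv P2 *m S2 *m pinv P1 *m S1) 1%:M 0 in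
  let W34 : 'M[R]_(n + n) :=
    block_mx (pinv P4 *m R4 - pinv P4 *m S4 *m pinv P3 *m R3)
             (pinv P4 *m S4 *m pinv P3 *m S3) 1%:M 0 in
  spectral_radius W12 <= spectral_radius W34 /\ spectral_radius W34 < 1.
Proof.
move=> _ sp1 sp2 sp3 sp4 NS2 RS2 NS4 RS4 spK1 spK2 hA1 hP1 hR1 hA2 hP2 hR2 nA1 nA2 HA HR W12 W34.
have [hB1 hC1 eq1 sp12] := hat_conv sp1 sp2 NS2 RS2 spK1 nA1.
have [hB2 hC2 eq2 sp34] := hat_conv sp3 sp4 NS4 RS4 spK2 nA2.
have E24 : pinv P2 *m P2 = pinv P4 *m P4.
  case: sp2 => _ [_ NP2 _ _ _]; case: sp4 => _ [_ NP4 _ _ _].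
  apply: proj_eq => x h.
    by have : nullsp P2 x by []; rewrite NP2 -NP4.
  by have : nullsp P4 x by []; rewrite NP4 -NP2.
set B1 := pinv P2 *m R2 - pinv P2 *m S2 *m pinv P1 *m R1 in hB1 eq1 sp12 W12 *.
set C1 := pinv P2 *m S2 *m pinv P1 *m S1 in hC1 eq1 sp12 W12 *.
set B2 := pinv P4 *m R4 - pinv P4 *m S4 *m pinv P3 *m R3 in hB2 eq2 sp34 W34 *.
set C2 := pinv P4 *m S4 *m pinv P3 *m S3 in hC2 eq2 sp34 W34 *.
have T12 : le_mx (B1 + C1) (B2 + C2).
  move=> i j; have := HA i j; rewrite /hP1 /hP2 /hA1 /hA2 eq1 eq2 E24 !mxsubE.
  move=> h; lra.
have B21 : le_mx B2 B1.
  move=> i j; have := HR i j.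
  have -> : pinv hP1 *m hR1 = B1 by rewrite /hP1 /hR1 /B1 mulmxBr !mulmxA.
  by have -> : pinv hP2 *m hR2 = B2 by rewrite /hP2 /hR2 /B2 mulmxBr !mulmxA.
have C12 : le_mx C1 C2.
  move=> i j; have := T12 i j; have := B21 i j; rewrite !mxaddE => h1 h2; lra.
split; last exact: sr_lt1 sp34.
apply: sr_le; first exact: sr_ge0.
move=> l hl.
have [->|l0] := eqVneq l 0; first by rewrite normc0 sr_ge0.
set r := normc l.
have r0 : 0 < r.
  rewrite lt_def normc_ge0 andbT; apply: contra l0 => /eqP /eq0_normc ->.
  by [].
have r1 : r < 1 := sp12 l hl.
have [u [hu u0 Hu]] := eig_to_vec hB1 hC1 hl l0.
have Hu2 : forall i, r * u i 0 <= (B2 *m u) i 0 + r^-1 * (C2 *m u) i 0.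
  move=> i; apply: (le_trans (Hu i)).
  have t := le_mx_mulr hu T12 i 0.
  have c := le_mx_mulr hu C12 i 0.
  rewrite (mulmxDl B1 C1 u) (mulmxDl B2 C2 u) !mxaddE in t.
  have ri1 : 1 <= r^-1 by rewrite invf_ge1 // ltW.
  have h := ler_wpM2l (x := r^-1 - 1) (ltac:(by rewrite subr_ge0)) c.
  rewrite !mulrBl !mul1r in h; rewrite -/r; lra.
set v : 'cV[R]_(n + n) := col_mx u (r^-1 *: u).
have hW : nn W34.
  apply: nn_block => //; first exact: nn_scalar.
  by move=> i j; rewrite mxE.
have hv : nn v.
  move=> i j; rewrite (ord1 j) /v -(splitK i); case: (split i) => k /=.
    by rewrite col_mxEu.
  by rewrite col_mxEd mxscaleE mulr_ge0 // invr_ge0 ltW.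
have v0 : v != 0.
  apply: contraNneq u0 => /eqP; rewrite /v -col_mx0 => /eqP /eq_col_mx [-> _].
  by [].
have Wv : forall k, r * v k 0 <= (W34 *m v) k 0.
  move=> k; rewrite /W34 /v mul_block_col mul1mx mul0mx addr0 -(splitK k).
  case: (split k) => i /=.
    by rewrite !col_mxEu mxaddE -scalemxAr mxscaleE.
  by rewrite !col_mxEd mxscaleE mulrA mulfV ?gt_eqF // mul1r.
have [s rs rts] := CW hW hv v0 Wv.
apply: le_trans (sr_ub (root_spec rts)).
by rewrite normc_real (le_trans rs (ler_norm s)).
Qed.
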